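(* Let $n$ be a positive integer with $n \equiv 1 \pmod{3}$, let $a = (n(n+1)-2)/3$, and let $\sigma$ be a permutation of $\mathbb{Z}_n = \{0,\dots,n-1\}$ such that $f_\sigma(\delta) \in \{a, a+2\}$ for every $\delta \in \{1,\dots,n-1\}$ (a near-perfect permutation). Then the Latin square $L$ defined by $L[i][j] = (i + \sigma^{-1}(j)) \bmod n$ for $i,j \in \{0,\dots,n-1\}$ satisfies $$I(L) = \frac{4n(n-1)}{9}.$$
   Context: For a permutation $\sigma$ of $\mathbb{Z}_n$, the shift correlation at shift $\delta$ is $f_\sigma(\delta) = \sum_{j=0}^{n-1} \lvert \sigma((j+\delta) \bmod n) - \sigma(j) \rvert$, where $\sigma$ takes values in $\{0,\dots,n-1\}$ and the absolute value is of ordinary integers. For an $n\times n$ Latin square $L$ (each symbol of $\{0,\dots,n-1\}$ occurring exactly once in each row and column; rows and columns indexed by $\{0,\dots,n-1\}$), $\mathrm{pos}(r,s)$ is the column containing symbol $s$ in row $r$, $d(r_1,r_2) = \sum_{s=0}^{n-1} \lvert \mathrm{pos}(r_1,s) - \mathrm{pos}(r_2,s)\rvert$, and the imbalance is $I(L) = \frac{1}{3} \sum_{0 \le r_1 < r_2 \le n-1} \lvert 3\, d(r_1,r_2) - n(n+1) \rvert$. *)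

(* Defs.v *)
From mathcomp Require Import all_boot all_order all_fingroup all_algebra.
Set Implicit Arguments. Unset Strict Implicit. Unset Printing Implicit Defensive.
Import Order.TTheory GRing.Theory Num.Theory.

Definition addmod (n : nat) (j : 'I_n) (d : nat) : 'I_n :=
  Ordinal (ltn_pmod (j + d) (leq_ltn_trans (leq0n j) (ltn_ord j))).

Definition shift_corr (n : nat) (s : {perm 'I_n}) (delta : nat) : nat :=
  \sum_(j < n) absz (Posz (val (s (addmod j delta))) - Posz (val (s j))).

(* a Latin square as a function rows -> columns -> symbols *)
Definition is_latin (n : nat) (L : 'I_n -> 'I_n -> 'I_n) : Prop :=
  (forall r, injective (L r)) /\ (forall c, injective (fun r => L r c)).

Definition pos (n : nat) (L : 'I_n -> 'I_n -> 'I_n) (r s : 'I_n) : nat :=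
  odflt 0 (omap (@nat_of_ord n) [pick c | L r c == s]).

Definition dist_rows (n : nat) (L : 'I_n -> 'I_n -> 'I_n) (r1 r2 : 'I_n) : nat :=
  (\sum_(s < n) absz (Posz (pos L r1 s) - Posz (pos L r2 s)))%N.

Definition imbalance (n : nat) (L : 'I_n -> 'I_n -> 'I_n) : rat :=
  ((3%:R)^-1 * \sum_(r1 < n) \sum_(r2 < n | (r1 < r2)%N)
     `|(((3 * dist_rows L r1 r2)%N)%:R - ((n * (n + 1))%N)%:R : rat)|%R)%R.

Definition latin_of_perm (n : nat) (s : {perm 'I_n}) : 'I_n -> 'I_n -> 'I_n :=
  fun i j => addmod i (val ((s^-1)%g j)).

(* Main.v *)
Require Import Defs.
From mathcomp Require Import all_boot all_order all_fingroup all_algebra.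
From mathcomp Require Import zify ring lra.
Import Order.TTheory GRing.Theory Num.Theory.
Set Implicit Arguments. Unset Strict Implicit. Unset Printing Implicit Defensive.

Lemma addmodK n (j r : 'I_n) : addmod (addmod j r) (n - r) = j.
Proof.
apply: val_inj => /=. rewrite modnDml -addnA subnKC ?(ltnW (ltn_ord r)) //.
by rewrite modnDr modn_small.
Qed.

Lemma addmodKV n (j r : 'I_n) : addmod (addmod j (n - r)) r = j.
Proof.
apply: val_inj => /=. rewrite modnDml -addnA subnK ?(ltnW (ltn_ord r)) //.
by rewrite modnDr modn_small.
Qed.

Lemma Lrow n (s : {perm 'I_n}) (r x : 'I_n) :
  latin_of_perm s r (s (addmod x (n - r))) = x.
Proof.
rewrite /latin_of_perm permK. apply: val_inj => /=.
rewrite modnDmr addnCA subnKC ?(ltnW (ltn_ord r)) //.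
by rewrite modnDr modn_small.
Qed.

Lemma pos_L n (s : {perm 'I_n}) (r x : 'I_n) :
  pos (latin_of_perm s) r x = val (s (addmod x (n - r))).
Proof.
rewrite /pos. case: pickP => [c /eqP Hc | H] /=.
- congr val. apply: (@perm_inj _ s^-1). rewrite permK.
  have := Lrow s r x. rewrite -{2}Hc /latin_of_perm permK => /(congr1 val) /= /eqP.
  rewrite eqn_modDl => /eqP; rewrite modn_mod (modn_small (ltn_ord _)) => E. by apply: val_inj.
- by move: (H (s (addmod x (n - r)))); rewrite Lrow eqxx.
Qed.

Lemma dist_shift n (s : {perm 'I_n}) (r1 r2 : 'I_n) : r1 <= r2 ->
  dist_rows (latin_of_perm s) r1 r2 = shift_corr s (r2 - r1).
Proof.
move=> le12. rewrite /dist_rows /shift_corr.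
rewrite (reindex_inj (h := fun j => addmod j r2)); last first.
  by apply: (can_inj (g := fun j => addmod j (n - r2))) => j; rewrite addmodK.
apply: eq_bigr => j _. rewrite !pos_L addmodK.
have -> : addmod (addmod j r2) (n - r1) = addmod j (r2 - r1) :> 'I_n.
  apply: val_inj => /=. rewrite modnDml -addnA.
  have -> : r2 + (n - r1) = (r2 - r1) + n.
    have := ltn_ord r1. have := ltn_ord r2. lia.
  by rewrite addnA modnDr.
by [].
Qed.

Lemma sum1 n : 2 * \sum_(i < n) absz (Posz i - Posz n) = n * n.+1.
Proof.
elim: n => [|n IH]; first by rewrite big_ord0.
rewrite big_ord_recr /=.
have -> : \sum_(i < n) absz (Posz (widen_ord (leqnSn n) i) - Posz n.+1)
   = \sum_(i < n) (absz (Posz i - Posz n) + 1).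
  apply: eq_bigr => i _ /=. have := ltn_ord i. lia.
rewrite big_split /= sum1_card card_ord. move: IH; set S := \sum_(i < n) _. lia.
Qed.

Lemma sumdist n : 3 * \sum_(i < n) \sum_(j < n) absz (Posz i - Posz j) = n.-1 * n * n.+1.
Proof.
elim: n => [|n IH]; first by rewrite big_ord0.
rewrite big_ord_recr /=.
under eq_bigr => i _ do rewrite big_ord_recr /=.
rewrite big_split /= big_ord_recr /=.
have E1 : \sum_(i < n) absz (Posz (widen_ord (leqnSn n) i) - Posz n) = \sum_(i < n) absz (Posz i - Posz n) by [].
have E2 : \sum_(i < n) absz (Posz n - Posz (widen_ord (leqnSn n) i)) = \sum_(i < n) absz (Posz i - Posz n).
  apply: eq_bigr => i _ /=. have := ltn_ord i. lia.
rewrite E1 E2 {E1 E2}.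
have := sum1 n. move: IH. set A := \sum_(i < n) _. set B := \sum_(i < n) _.
have -> : absz (Posz n - Posz n) = 0 by lia.
case: n A B => [|n] A B; nia.
Qed.
Lemma sym_half n (G : 'I_n -> 'I_n -> rat) : (forall r, G r r = 0%R) ->
  (forall a b, G a b = G b a) ->
  ((\sum_(r1 < n) \sum_(r2 < n | (r1 < r2)%N) G r1 r2) *+ 2 = \sum_(r1 < n) \sum_(r2 < n) G r1 r2)%R.
Proof.
move=> G0 Gs.
have E : forall r1 : 'I_n, (\sum_(r2 < n) G r1 r2 = \sum_(r2 < n | (r1 < r2)%N) G r1 r2 + \sum_(r2 < n | (r2 < r1)%N) G r1 r2)%R.
  move=> r1; rewrite (bigID (fun r2 : 'I_n => (r1 < r2)%N)) /=; congr (_ + _)%R.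
  rewrite big_mkcond [RHS]big_mkcond; apply: eq_bigr => r2 _.
  case: ltngtP => //= h. have -> : r1 = r2 by apply: val_inj. by rewrite G0.
under [RHS]eq_bigr => r1 _ do rewrite E.
rewrite big_split /= mulr2n; congr (_ + _)%R.
under eq_bigr => r1 _ do rewrite big_mkcond.
under [RHS]eq_bigr => r1 _ do rewrite big_mkcond.
rewrite [RHS]exchange_big; apply: eq_bigr => a _; apply: eq_bigr => b _.
by rewrite Gs.
Qed.

Lemma sumD n (s : {perm 'I_n}) :
  3 * \sum_(r1 < n) \sum_(r2 < n) dist_rows (latin_of_perm s) r1 r2 = n * (n.-1 * n * n.+1).
Proof.
rewrite /dist_rows.
under eq_bigr => r1 _ do rewrite exchange_big.
rewrite exchange_big /= big_distrr /=.
transitivity (\sum_(x < n) (n.-1 * n * n.+1)); last by rewrite sum_nat_const card_ord.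
apply: eq_bigr => x _.
have inj : injective (fun r : 'I_n => s (addmod x (n - r))).
  move=> r r' /perm_inj E.
  have h1 := addmodKV x r. have h2 := addmodKV x r'. rewrite E in h1.
  move: h1 h2; set y := addmod x (n - r') => h1 h2.
  have : addmod y r = addmod y r' by rewrite h1 h2.
  move/(congr1 val) => /= /eqP.
  rewrite eqn_modDl !modn_small ?ltn_ord // => /eqP h. by apply: val_inj.
rewrite -sumdist; congr (3 * _); symmetry.
rewrite (reindex_inj inj) /=. apply: eq_bigr => r1 _.
rewrite (reindex_inj inj) /=. apply: eq_bigr => r2 _. by rewrite !pos_L.
Qed.

Theorem proposition5 (n : nat) (Hn : 0 < n) (Hmod : n %% 3 = 1)
  (s : {perm 'I_n}) :
  (forall delta : nat, 1 <= delta <= n - 1 ->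
     shift_corr s delta = (n * (n + 1) - 2) %/ 3 \/
     shift_corr s delta = (n * (n + 1) - 2) %/ 3 + 2) ->
  imbalance (latin_of_perm s) = ((4 * n * (n - 1))%:R / 9%:R)%R.
Proof.
move=> Hs.
set L := latin_of_perm s.
set a := (n * (n + 1) - 2) %/ 3.
have Ha : n * (n + 1) = 3 * a + 2.
  rewrite /a. have hn := divn_eq n 3. rewrite Hmod in hn.
  move: (n %/ 3) hn => q hn.
  have -> : n * (n + 1) - 2 = 3 * (3 * q * q + 3 * q) by rewrite hn; nia.
  rewrite mulKn //. rewrite hn; nia.
have {}Hs : forall delta : nat, 1 <= delta <= n - 1 ->
     shift_corr s delta = a \/ shift_corr s delta = a + 2 := Hs.
clearbody a.
set c : rat := ((8%:R - (n * (n + 1))%:R) / 3%:R)%R.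
pose D (r1 r2 : 'I_n) : rat := ((dist_rows L r1 r2)%:R)%R.
have K1 : forall r1 r2 : 'I_n, r1 < r2 ->
    (`|((3 * dist_rows L r1 r2)%N)%:R - ((n * (n + 1))%N)%:R : rat| = D r1 r2 + c)%R.
  move=> r1 r2 lt12. rewrite /D /L dist_shift; last exact: ltnW.
  have hd : 1 <= r2 - r1 <= n - 1 by have := ltn_ord r2; lia.
  have hN : ((n * (n + 1))%:R = 3%:R * a%:R + 2%:R :> rat)%R.
    by rewrite Ha natrD natrM.
  rewrite /c hN. case: (Hs _ hd) => ->.
    rewrite natrM. set A := (a%:R : rat).
    have -> : (3%:R * A - (3%:R * A + 2%:R) = - 2%:R :> rat)%R by ring.
    rewrite normrN ger0_norm; last by [].
    by field.
  rewrite natrM natrD. set A := (a%:R : rat).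
  have -> : (3%:R * (A + 2%:R) - (3%:R * A + 2%:R) = 4%:R :> rat)%R by ring.
  rewrite ger0_norm; last by [].
  by field.
pose G (r1 r2 : 'I_n) : rat := (D r1 r2 + c - (if r2 == r1 then c else 0))%R.
have D0 : forall r, D r r = 0%R.
  move=> r; rewrite /D /dist_rows big1 // => x _. lia.
have Ds : forall r1 r2, D r1 r2 = D r2 r1.
  move=> r1 r2; rewrite /D /dist_rows; congr (_%:R)%R; apply: eq_bigr => x _; lia.
have G0 : forall r, G r r = 0%R by move=> r; rewrite /G eqxx D0; ring.
have Gs : forall r1 r2, G r1 r2 = G r2 r1.
  move=> r1 r2; rewrite /G Ds eq_sym //.
have S1 : (\sum_(r1 < n) \sum_(r2 < n | (r1 < r2)%N)
     `|((3 * dist_rows L r1 r2)%N)%:R - ((n * (n + 1))%N)%:R : rat|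
     = \sum_(r1 < n) \sum_(r2 < n | (r1 < r2)%N) G r1 r2)%R.
  apply: eq_bigr => r1 _; apply: eq_bigr => r2 lt12.
  rewrite K1 // /G. have -> : (r2 == r1) = false by apply/negbTE; rewrite neq_ltn lt12 orbT.
  by rewrite subr0.
have S2 : (\sum_(r1 < n) \sum_(r2 < n) G r1 r2 =
    \sum_(r1 < n) \sum_(r2 < n) D r1 r2 + c *+ (n * n) - c *+ n)%R.
  rewrite /G.
  under eq_bigr => r1 _ do rewrite big_split /= big_split /= sumr_const card_ord sumrN -big_mkcond /= big_pred1_eq.
  rewrite big_split /= big_split /= !sumr_const card_ord.
  by rewrite -mulrnA mulNrn.
have S3 : ((\sum_(r1 < n) \sum_(r2 < n) D r1 r2) *+ 3 = (n * (n.-1 * n * n.+1))%:R :> rat)%R.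
  rewrite -(sumD s) natrM mulr_natl; apply: (congr1 (fun x => x *+ 3)%R).
  rewrite natr_sum; apply: eq_bigr => r1 _. rewrite natr_sum. exact: eq_bigr.
rewrite /imbalance S1.
have H2 := sym_half G0 Gs. rewrite S2 in H2.
move: H2 S3.
set X := (\sum_(r1 < n) \sum_(r2 < n | _) G r1 r2)%R.
set T := (\sum_(r1 < n) \sum_(r2 < n) D r1 r2)%R => H2 S3.
rewrite -[(X *+ 2)%R]mulr_natr -[(c *+ (n * n))%R]mulr_natr -[(c *+ n)%R]mulr_natr in H2.
rewrite -[(T *+ 3)%R]mulr_natr in S3.
have hx : X = ((T + c * (n * n)%:R - c * n%:R) / 2%:R)%R by rewrite -H2; field.
have ht : T = ((n * (n.-1 * n * n.+1))%:R / 3%:R)%R by rewrite -S3; field.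
rewrite hx ht /c.
have [m hm] : exists m, n = m.+1 by exists n.-1; rewrite prednK.
rewrite hm !natrM /= subn1 addn1 /= !mulrSr.
by field.
Qed.
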